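(* For all unitary modified types $\boldsymbol\mu,\boldsymbol\nu,\boldsymbol\lambda$, the structure constant polynomial $r_{\boldsymbol\mu,\boldsymbol\nu}^{\boldsymbol\lambda}\in\mathbb{Q}[x]$ has degree in $x$ at most $2(|\boldsymbol\mu|+|\boldsymbol\nu|-|\boldsymbol\lambda|)$ (so it vanishes if $|\boldsymbol\lambda|>|\boldsymbol\mu|+|\boldsymbol\nu|$).
   Context: $q$ is a fixed prime power, $\sigma(z)=z^q$ on $\mathbb{F}_{q^2}$. $U_n(\mathbb{F}_q)=\{g\in GL_n(\mathbb{F}_{q^2}): g^T\sigma(g)=\mathrm{Id}\}$, embedded in $U_{n+1}(\mathbb{F}_q)$ by $g\mapsto\operatorname{diag}(g,1)$. Elements $g\in U_n(\mathbb{F}_q)$, $g'\in U_{n'}(\mathbb{F}_q)$ have the same unitary modified type if for some $N\ge n,n'$ their images in $U_N(\mathbb{F}_q)$ are conjugate in $U_N(\mathbb{F}_q)$; a unitary modified type is such an equivalence class, and its size $|\boldsymbol\mu|$ is $\operatorname{rank}(g-\mathrm{Id})$ for $g$ in the class. $X_{\boldsymbol\mu,n}$ is the sum of all elements of $U_n(\mathbb{F}_q)$ of modified type $\boldsymbol\mu$. $[n]_{-q}=((-q)^n-1)/(-q-1)$. The polynomials $r_{\boldsymbol\mu,\boldsymbol\nu}^{\boldsymbol\lambda}\in\mathbb{Q}[x]$ are those with $X_{\boldsymbol\mu,n}X_{\boldsymbol\nu,n}=\sum_{\boldsymbol\lambda}r_{\boldsymbol\mu,\boldsymbol\nu}^{\boldsymbol\lambda}([n]_{-q})X_{\boldsymbol\lambda,n}$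 for all $n\ge0$. *)

(* Defs.v *)
From HB Require Import structures.
From mathcomp Require Import all_boot all_order all_algebra all_field.
From mathcomp Require Import boolp.
Set Implicit Arguments. Unset Strict Implicit. Unset Printing Implicit Defensive.
Import Order.TTheory GRing.Theory Num.Theory.
Local Open Scope ring_scope.

(* F plays the role of F_{q^2} (a finite field with #|F| = q^2);
   sigma z = z^q is its Frobenius involution. *)
Section Unitary.
Variables (F : finFieldType) (q : nat).

Definition sigma (z : F) : F := z ^+ q.

Definition unitary (n : nat) (g : 'M[F]_n) : bool :=
  g^T *m map_mx sigma g == 1%:M.

(* the embedding g |-> diag(g, Id) of 'M_n into 'M_N (for n <= N) *)
Definition embed (n N : nat) (g : 'M[F]_n) : 'M[F]_N :=
  \matrix_(i < N, j < N)
    match (insub (val i) : option 'I_n), (insub (val j) : option 'I_n) with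
    | Some i', Some j' => g i' j'
    | _, _ => if val i == val j then 1 else 0
    end.

Definition same_type (n n' : nat) (g : 'M[F]_n) (g' : 'M[F]_n') : Prop :=
  exists N : nat, [/\ (n <= N)%N, (n' <= N)%N &
    exists h : 'M[F]_N, unitary h /\
      embed N g' = h *m embed N g *m invmx h].

(* a unitary modified type, given by a representative element *)
Record utype := UType { ut_n : nat; ut_g : 'M[F]_ut_n; ut_unitary : unitary ut_g }.

Definition usize (mu : utype) : nat := \rank (ut_g mu - 1%:M).

Definition has_type (n : nat) (g : 'M[F]_n) (mu : utype) : Prop :=
  unitary g /\ same_type (ut_g mu) g.

(* X_{mu,n}, as an element of the group algebra Q[U_n], viewed as a function
   on 'M_n supported on U_n *)
Definition X (mu : utype) (n : nat) : {ffun 'M[F]_n -> rat} :=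
  [ffun g => if `[< has_type g mu >] then 1 else 0].

Definition galg_mul (n : nat) (f1 f2 : {ffun 'M[F]_n -> rat}) :
    {ffun 'M[F]_n -> rat} :=
  [ffun g => \sum_(a : 'M[F]_n) \sum_(b : 'M[F]_n | a *m b == g) f1 a * f2 b].

End Unitary.

Definition qint (q n : nat) : rat :=
  ((- (q%:R)) ^+ n - 1) / (- (q%:R) - 1).

(* r is the structure constant polynomial r_{mu,nu}^lambda: for every n >= 0,
   the coefficient of X_{lambda,n} in X_{mu,n} X_{nu,n} is r([n]_{-q}).
   Since the X_{lambda,n} have disjoint supports, this coefficient is the
   value of the product at any g in U_n of type lambda (there is no
   condition when no element of U_n has type lambda, as then X_{lambda,n}=0). *)
Definition is_struct_const (F : finFieldType) (q : nat)
    (mu nu lam : utype F q) (r : {poly rat}) : Prop :=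
  forall (n : nat) (g : 'M[F]_n), has_type g lam ->
    galg_mul (X mu n) (X nu n) g = r.[qint q n].

(* Main.v *)
Require Import Defs.
From HB Require Import structures.
From mathcomp Require Import all_boot all_order all_algebra all_field all_fingroup all_solvable.
From mathcomp Require Import zify boolp ring lra.
Import Order.TTheory GRing.Theory Num.Theory.
Set Implicit Arguments. Unset Strict Implicit. Unset Printing Implicit Defensive.
Local Open Scope ring_scope.

Lemma q_pchar (F : finFieldType) (q : nat) (hF : #|F| = (q ^ 2)%N) :
  [pchar F].-nat q.
Proof.
have [p pr_p chp] := finPcharP F.
have pg : pgroup p [set: F] := abelem_pgroup (fin_ring_pchar_abelem chp).
have : p.-nat (q ^ 2)%N by rewrite -hF -cardsT.
rewrite pnatX orbF => pq.
apply: sub_in_pnat pq => d _; rewrite !inE => /eqP->; exact: chp.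
Qed.

Lemma q_gt1 (F : finFieldType) (q : nat) (hF : #|F| = (q ^ 2)%N) : (1 < q)%N.
Proof.
have := finNzRing_gt1 F; rewrite hF; clear hF; case: q => [|[|q]] //.
Qed.

Section Sig.
Variables (F : finFieldType) (q : nat).
Hypothesis hF : #|F| = (q ^ 2)%N.

Lemma sigma_nmod : nmod_morphism (sigma (F:=F) q).
Proof.
split; first by rewrite /sigma expr0n; case: q (q_gt1 hF).
by move=> x y; rewrite /sigma exprDn_pchar ?q_pchar.
Qed.

Lemma sigma_mon : GRing.monoid_morphism (sigma (F:=F) q).
Proof. by split; [rewrite /sigma expr1n | move=> x y; rewrite /sigma exprMn]. Qed.

End Sig.

Lemma polyA (r : {poly rat}) (x : rat) : r != 0 -> 1 <= `|x| ->
  `|lead_coef r| * `|x| ^+ (size r).-1 <=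
  `|r.[x]| + (\sum_(0 <= i < (size r).-1) `|r`_i|) * `|x| ^+ (size r).-2.
Proof.
move=> hr hx.
set e := (size r).-1.
have hs : size r = e.+1 by rewrite prednK // size_poly_gt0.
have eq1 : r.[x] = \sum_(0 <= i < e) r`_i * x ^+ i + lead_coef r * x ^+ e.
  rewrite horner_coef -(big_mkord xpredT (fun i => r`_i * x ^+ i)) hs.
  by rewrite big_nat_recr //= lead_coefE.
have h2 : `|\sum_(0 <= i < e) r`_i * x ^+ i| <=
          (\sum_(0 <= i < e) `|r`_i|) * `|x| ^+ e.-1.
  apply: le_trans (ler_norm_sum _ _ _) _.
  rewrite mulr_suml big_nat_cond [X in _ <= X]big_nat_cond.
  apply: ler_sum => i /andP [/andP [_ hi] _].
  rewrite normrM normrX; apply: (ler_wpM2l (normr_ge0 _)).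
  apply: ler_weXn2l => //; lia.
have h3 : lead_coef r * x ^+ e = r.[x] - \sum_(0 <= i < e) r`_i * x ^+ i.
  by rewrite eq1 addrC addKr.
rewrite -normrX -normrM h3.
apply: le_trans (ler_normB _ _) _.
by rewrite lerD2l.
Qed.

Lemma qint_norm (q n : nat) : (0 < q)%N ->
  (q ^ n)%:R - 1 <= (q + 1)%:R * `|qint q n| :> rat.
Proof.
move=> hq; rewrite /qint normf_div.
have -> : `|- (q%:R : rat) - 1| = (q + 1)%:R.
  by rewrite -opprD normrN natr1 normr_nat addn1.
rewrite mulrC divfK ?pnatr_eq0 ?addn1 //.
apply: le_trans (lerB_dist _ _).
by rewrite normrX normrN normr_nat normr1 natrX.
Qed.

Lemma deg_bound (r : {poly rat}) (q : nat) (C : rat) (d n0 : nat) :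
  (1 < q)%N -> 0 <= C ->
  (forall n, (n0 <= n)%N -> `|r.[qint q n]| <= C * ((q ^ 2) ^ (d * n))%:R) ->
  r != 0 -> ((size r).-1 <= 2 * d)%N.
Proof.
move=> hq hC hb hr; rewrite leqNgt; apply/negP => hlt.
set e := (size r).-1 in hlt.
set c := lead_coef r.
have hc : 0 < `|c| by rewrite normr_gt0 lead_coef_eq0.
set S := \sum_(0 <= i < e) `|r`_i|.
have hS : 0 <= S by apply: sumr_ge0 => i _.
set K : rat := ((q + 2) ^ (2 * d))%:R.
have hK : 0 <= K by [].
set B := (C * K + S) / `|c|.
have hB : 0 <= B by apply: divr_ge0 => //; apply: addr_ge0 => //; apply: mulr_ge0.
set x0 := (q + 1)%:R * B + (q + 3)%:R.
have hx0 : 0 <= x0 by apply: addr_ge0 => //; apply: mulr_ge0.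
set n := (n0 + Num.bound x0)%N.
have hn : x0 < (q ^ n)%:R.
  apply: lt_le_trans (archi_boundP hx0) _.
  rewrite ler_nat; apply: leq_trans (ltnW (ltn_expl _ hq)); exact: leq_addl.
set x := qint q n.
have hx1 := qint_norm n (ltnW hq).
rewrite -/x in hx1.
have hq1 : 0 < (q + 1)%:R :> rat by rewrite ltr0n addn1.
have hxB : B + 1 < `|x|.
  rewrite -(ltr_pM2l hq1); apply: lt_le_trans hx1.
  rewrite ltrBrDr mulrDr mulr1 -addrA.
  apply: le_lt_trans hn; rewrite /x0 lerD2l natr1 ler_nat; clear; lia.
have hx1' : 1 <= `|x|.
  apply: le_trans (ltW hxB); by rewrite addrC lerDl.
have hqn : (q ^ n)%:R <= (q + 2)%:R * `|x|.
  rewrite lerBlDr in hx1; apply: le_trans hx1 _.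
  have -> : (q + 2)%:R = (q + 1)%:R + 1 :> rat by rewrite natr1 addn1 addn2.
  by rewrite mulrDl mul1r lerD2l.
have hxp : 0 <= `|x| by [].
have h1 : `|r.[x]| <= C * K * `|x| ^+ (2 * d).
  apply: le_trans (hb n (leq_addr _ _)) _.
  rewrite -mulrA; apply: (ler_wpM2l hC).
  have -> : ((q ^ 2) ^ (d * n))%:R = ((q ^ n)%:R) ^+ (2 * d) :> rat.
    by rewrite -natrX -!expnM mulnA (mulnC n).
  rewrite /K [X in _ <= X * _]natrX -exprMn.
  by apply: lerXn2r; rewrite ?nnegrE //; apply: mulr_ge0.
have h2 : `|x| ^+ (2 * d) <= `|x| ^+ e.-1.
  by apply: ler_weXn2l => //; clear -hlt; lia.
have h3 := polyA hr hx1'.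
rewrite -/e -/c -/S in h3.
have he : e = e.-1.+1 by rewrite prednK //; clear -hlt; lia.
have hpos : 0 < `|x| ^+ e.-1 by apply: exprn_gt0; apply: lt_le_trans hx1'.
have h4 : `|c| * `|x| * `|x| ^+ e.-1 <= (C * K + S) * `|x| ^+ e.-1.
  rewrite -mulrA -exprS -he mulrDl.
  apply: le_trans h3 _; rewrite lerD2r.
  apply: le_trans h1 _; exact: (ler_wpM2l (mulr_ge0 hC hK) h2).
rewrite ler_pM2r // in h4.
have hxle : `|x| <= B by rewrite /B ler_pdivlMr // mulrC.
have := lt_le_trans hxB hxle.
by rewrite ltNge lerDl.
Qed.

Section LA.
Variables (F : fieldType) (s : {rmorphism F -> F}).

Lemma sub_pid (n r : nat) (D : 'M[F]_n) : (\rank D <= r)%N ->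
  exists V0 : 'M[F]_(r, n), (D <= V0)%MS.
Proof.
move=> hr; exists (pid_mx r *m row_ebase D).
have e : (pid_mx (\rank D) : 'M[F]_n) =
   (pid_mx (\rank D) *m (pid_mx r : 'M_(n, r))) *m (pid_mx r : 'M_(r, n)).
  rewrite !mul_pid_mx; f_equal.
  have hn := rank_leq_row D.
  by rewrite (minn_idPl hr) (minn_idPr hn) (minn_idPl hr) (minn_idPr hr).
have eD : D = (col_ebase D *m pid_mx (\rank D) *m (pid_mx r : 'M_(n, r))) *m (pid_mx r *m row_ebase D).
  by rewrite -{1}(mulmx_ebase D) {1}e !mulmxA.
rewrite {1}eD; exact: submxMl.
Qed.

Lemma exists_base n k (X : 'M[F]_n) : \rank X = k ->
  exists Z : 'M[F]_(k, n), (Z :=: X)%MS.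
Proof. by move=> <-; exists (row_base X); exact: eq_row_base. Qed.

Lemma key n (a b g : 'M[F]_n) k l :
  a^T *m map_mx s a = 1%:M -> a *m b = g ->
  \rank (a - 1%:M) = k -> \rank (b - 1%:M) = l ->
  exists (T : 'M[F]_(k, \rank (g - 1%:M)^T + (k + l - \rank (g - 1%:M)^T)))
    (V0 : 'M[F]_(k + l - \rank (g - 1%:M)^T, n)) (M : 'M[F]_k),
   a = 1%:M + (T *m col_mx (row_base (g - 1%:M)^T) V0)^T *m M
        *m map_mx s (T *m col_mx (row_base (g - 1%:M)^T) V0).
Proof.
move=> hu hab hk hl.
set A := a - 1%:M; set B := b - 1%:M; set G := g - 1%:M.
have hG : G^T = b^T *m A^T + B^T.
  by rewrite -trmx_mul -linearD /= /A /B /G -hab mulmxBl mul1mx addrA subrK.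
have hW : (G^T <= A^T + B^T)%MS by rewrite hG addmx_sub_adds ?submxMl.
have [Z eqZ] := exists_base (X := A^T) (etrans (mxrank_tr _) hk).
have rZ : \rank Z = k by rewrite eqZ mxrank_tr.
have /row_freeP [Lr hLr] : row_free Z by rewrite /row_free rZ.
have /submxP [C hC] : (A^T <= Z)%MS by rewrite eqZ.
have hu' : map_mx s a *m a^T = 1%:M by apply: mulmx1C.
have hsA : map_mx s A = map_mx s a - 1%:M by rewrite /A map_mxB map_mx1.
have hAT : A^T = - (map_mx s A *m a^T).
  by rewrite hsA mulmxBl hu' mul1mx opprB /A linearB /= trmx1.
have hA1 : A = - (a *m map_mx s C) *m map_mx s Z.
  rewrite -[A]trmxK hAT linearN /= trmx_mul trmxK map_trmx hC map_mxM.
  by rewrite mulNmx mulmxA.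
have hA2 : A = Z^T *m C^T by rewrite -[A]trmxK hC trmx_mul.
have hCT : C^T = Lr^T *m A.
  by rewrite hA2 mulmxA -trmx_mul hLr trmx1 mul1mx.
have hA : A = Z^T *m (Lr^T *m - (a *m map_mx s C)) *m map_mx s Z.
  by rewrite -!mulmxA -hA1 -hCT.
set mg := \rank G^T.
set D := (A^T :\: G^T)%MS.
have rD : (\rank D <= k + l - mg)%N.
  have h1 := mxrank_cap_compl A^T G^T.
  have h2 := mxrank_sum_cap A^T G^T.
  have h3 : (\rank (A^T + G^T) <= \rank (A^T + B^T))%N.
    by apply: mxrankS; rewrite addsmx_sub addsmxSl hW.
  have h4 : (\rank (A^T + B^T) <= \rank A^T + \rank B^T)%N := mxrank_adds_leqif _ _.
  rewrite !mxrank_tr hk hl in h1 h2 h4 *.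
  rewrite -/D -/mg in h1 h2 h4 *.
  have e3 : mg = \rank G by rewrite /mg mxrank_tr.
  lia.
have [V0 hV0] := sub_pid rD.
have hZ : (Z <= col_mx (row_base G^T) V0)%MS.
  rewrite eqZ -addsmxE -(addsmx_diff_cap_eq A^T G^T) addsmxC.
  apply: addsmxS; last exact: hV0.
  by rewrite eq_row_base capmxSr.
have [T hT] := submxP hZ.
exists T, V0, (Lr^T *m - (a *m map_mx s C)).
by rewrite -hT -hA /A addrC subrK.
Qed.
End LA.

Section Main.
Variables (F : finFieldType) (q : nat).
Hypothesis hF : #|F| = (q ^ 2)%N.

HB.instance Definition _ := GRing.isNmodMorphism.Build F F (sigma (F:=F) q) (sigma_nmod hF).
HB.instance Definition _ := GRing.isMonoidMorphism.Build F F (sigma (F:=F) q) (@sigma_mon F q).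

Definition Emx n N : 'M[F]_(n, N) := \matrix_(i, j) (val i == val j)%:R.

Lemma sumE n (i : nat) (f : 'I_n -> F) :
  \sum_(l < n) (val l == i)%:R * f l = oapp f 0 (insub i).
Proof.
case: insubP => [i' _ ei' | hi] /=.
  rewrite (bigD1 i') //= ei' eqxx mul1r big1 ?addr0 // => l hl.
  by rewrite -ei' (inj_eq val_inj) (negbTE hl) mul0r.
rewrite big1 // => l _; case: eqP => [e|]; last by rewrite mul0r.
by have := ltn_ord l; rewrite e => /(negP hi).
Qed.

Lemma Emx_ET n N : (n <= N)%N -> Emx n N *m (Emx n N)^T = 1%:M.
Proof.
move=> hn; apply/matrixP => i j; rewrite !mxE.
under eq_bigr => l _ do rewrite !mxE eq_sym.
rewrite (sumE (val i) (fun l : 'I_N => (val j == val l)%:R)).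
case: insubP => [l _ el|hi] /=; first by rewrite el eq_sym.
by case/negP: hi; exact: leq_trans (ltn_ord i) hn.
Qed.

Lemma embedE n N (x : 'M[F]_n) : (n <= N)%N ->
  embed N x = (Emx n N)^T *m x *m Emx n N + (1%:M - (Emx n N)^T *m Emx n N).
Proof.
move=> hn; apply/matrixP => i j; rewrite !mxE.
under eq_bigr => k _ do rewrite !mxE.
under eq_bigr => k _ do under eq_bigr => l _ do rewrite !mxE.
under eq_bigr => k _ do rewrite (sumE (val i) (fun l => x l k)).
under eq_bigr => k _ do rewrite mulrC.
rewrite (sumE (val j) (fun k => oapp (fun l => x l k) 0 (insub (val i)))).
under [X in _ = _ + (_ - X)]eq_bigr => k _ do rewrite !mxE.
rewrite (sumE (val i) (fun l : 'I_n => (val l == val j)%:R)).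
case: (@insubP _ _ 'I_n (val i)) => [i' _ ei'|hi] /=;
case: (@insubP _ _ 'I_n (val j)) => [j' _ ej'|hj] /=.
- change (nat_of_ord i' = nat_of_ord i) in ei'.
  rewrite ei'; suff -> : (i == j) = (nat_of_ord i == nat_of_ord j) by rewrite subrr addr0.
  by [].
- change (nat_of_ord i' = nat_of_ord i) in ei'.
  have hij : (nat_of_ord i == nat_of_ord j) = false.
    apply/eqP => e; apply: (negP hj); change (nat_of_ord j < n)%N.
    by rewrite -e -ei' ltn_ord.
  rewrite ei' hij /=.
  by case: eqP => [/(congr1 val)/eqP|]; rewrite ?hij // add0r subrr.
- by rewrite add0r subr0 -(inj_eq val_inj); case: (_ == _).
- by rewrite add0r subr0 -(inj_eq val_inj); case: (_ == _).
Qed.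

Lemma embed_id n (x : 'M[F]_n) : embed n x = x.
Proof. by apply/matrixP => i j; rewrite mxE !valK. Qed.

Section Emb.
Variables (n N : nat) (hn : (n <= N)%N).
Local Notation E := (Emx n N).
Definition Pmx : 'M[F]_N := 1%:M - E^T *m E.
Local Notation P := Pmx.
Let hEE : E *m E^T = 1%:M := Emx_ET hn.
Let hEP : E *m P = 0.
Proof. by rewrite /Pmx mulmxBr mulmx1 mulmxA hEE mul1mx subrr. Qed.
Let hPE : P *m E^T = 0.
Proof. by rewrite /Pmx mulmxBl mul1mx -mulmxA hEE mulmx1 subrr. Qed.
Let hPP : P *m P = P.
Proof. by rewrite {1}/Pmx mulmxBl mul1mx -mulmxA hEP mulmx0 subr0. Qed.

Let prod_emb (y z : 'M[F]_n) :
  (E^T *m y *m E + P) *m (E^T *m z *m E + P) = E^T *m (y *m z) *m E + P.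
Proof.
rewrite mulmxDl (mulmxDr (E^T *m y *m E) (E^T *m z *m E) P) (mulmxDr P (E^T *m z *m E) P) hPP -!mulmxA hEP !mulmx0 addr0.
rewrite [P *m _]mulmxA hPE mul0mx add0r.
by rewrite !mulmxA -[E^T *m y *m E *m E^T]mulmxA hEE mulmx1.
Qed.

Lemma embed_sub1 (x : 'M[F]_n) : embed N x - 1%:M = E^T *m (x - 1%:M) *m E.
Proof.
by rewrite embedE // /Pmx mulmxBr mulmx1 mulmxBl addrA addrAC addrK.
Qed.

Lemma rank_embed (x : 'M[F]_n) : \rank (embed N x - 1%:M) = \rank (x - 1%:M).
Proof.
rewrite embed_sub1; apply/eqP; rewrite eqn_leq; apply/andP; split.
  exact: leq_trans (mxrankM_maxl _ _) (mxrankM_maxr _ _).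
have e : x - 1%:M = E *m (E^T *m (x - 1%:M) *m E) *m E^T.
  by rewrite !mulmxA hEE mul1mx -mulmxA hEE mulmx1.
rewrite {1}e.
exact: leq_trans (mxrankM_maxl _ _) (mxrankM_maxr _ _).
Qed.

Lemma unitary_embed (x : 'M[F]_n) : unitary q x -> unitary q (embed N x).
Proof.
rewrite /unitary => /eqP hx.
have hsE : map_mx (sigma q) E = E.
  by apply/matrixP => i j; rewrite !mxE rmorph_nat.
have hT : (embed N x)^T = E^T *m x^T *m E + P.
  rewrite embedE // /Pmx linearD /= !trmx_mul trmxK linearB /= trmx1 trmx_mul trmxK.
  by rewrite mulmxA.
have hs : map_mx (sigma q) (embed N x) = E^T *m map_mx (sigma q) x *m E + P.
  by rewrite embedE // /Pmx map_mxD map_mxB map_mx1 !map_mxM -map_trmx hsE.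
by rewrite hT hs prod_emb hx mulmx1 /Pmx addrC subrK.
Qed.
End Emb.

Lemma unitary_unit n (h : 'M[F]_n) : unitary q h -> h \in unitmx.
Proof. by move=> /eqP /mulmx1_unit [+ _]; rewrite unitmx_tr. Qed.

Lemma rank_unitL n (h : 'M[F]_n) m (Y : 'M[F]_(n, m)) : h \in unitmx ->
  \rank (h *m Y) = \rank Y.
Proof.
move=> hu; apply/eqP; rewrite eqn_leq mxrankM_maxr /=.
by rewrite -{1}(mulKmx hu Y) mxrankM_maxr.
Qed.

Lemma rank_unitR n (h : 'M[F]_n) m (Y : 'M[F]_(m, n)) : h \in unitmx ->
  \rank (Y *m h) = \rank Y.
Proof.
move=> hu; apply/eqP; rewrite eqn_leq mxrankM_maxl /=.
by rewrite -{1}(mulmxK hu Y) mxrankM_maxl.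
Qed.

Lemma has_type_rank n (a : 'M[F]_n) (mu : utype F q) :
  has_type a mu -> \rank (a - 1%:M) = usize mu.
Proof.
case=> _ [N [hmN hnN [h [hu he]]]].
rewrite /usize -(rank_embed hnN) he -(rank_embed hmN).
have hU := unitary_unit hu.
have -> : h *m embed N (ut_g mu) *m invmx h - 1%:M
          = h *m (embed N (ut_g mu) - 1%:M) *m invmx h.
  by rewrite mulmxBr mulmxBl mulmx1 mulmxV.
by rewrite rank_unitR ?unitmx_inv // rank_unitL.
Qed.

Lemma unitary1 n : unitary q (1%:M : 'M[F]_n).
Proof. by rewrite /unitary trmx1 map_mx1 mulmx1. Qed.

Lemma has_type_embed n (lam : utype F q) : (ut_n lam <= n)%N ->
  has_type (embed n (ut_g lam)) lam.
Proof.
move=> hn; split; first exact: unitary_embed (ut_unitary lam).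
exists n; split => //; exists 1%:M; split; first exact: unitary1.
by rewrite embed_id invmx1 mul1mx mulmx1.
Qed.

Section Count.
Variables (mu nu : utype F q) (n : nat) (g : 'M[F]_n).
Let k := usize mu.
Let l := usize nu.
Let mg := \rank (g - 1%:M)^T.
Let rr := (k + l - mg)%N.
Let Gb := row_base (g - 1%:M)^T.

Definition param (t : 'M[F]_(k, mg + rr) * 'M[F]_(rr, n) * 'M[F]_k) : 'M[F]_n :=
  1%:M + (t.1.1 *m col_mx Gb t.1.2)^T *m t.2 *m map_mx (sigma q) (t.1.1 *m col_mx Gb t.1.2).

Definition Sset : {set 'M[F]_n} :=
  [set a | `[< has_type a mu >] && [exists b, (a *m b == g) && `[< has_type b nu >]]].

Lemma Sset_sub : Sset \subset [set param t | t in setT].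
Proof.
apply/subsetP => a; rewrite inE => /andP [/asboolP hta /existsP [b /andP [/eqP hab /asboolP htb]]].
have hu : a^T *m map_mx (sigma q) a = 1%:M by apply/eqP; case: hta.
have [T [V0 [M e]]] := key hu hab (has_type_rank hta) (has_type_rank htb).
by apply/imsetP; exists (T, V0, M); rewrite ?inE // /param /= e.
Qed.

Lemma card_Sset : (#|Sset| <= #|F| ^ (k * (mg + rr)) * #|F| ^ (rr * n) * #|F| ^ (k * k))%N.
Proof.
apply: leq_trans (subset_leq_card Sset_sub) _.
apply: leq_trans (leq_imset_card _ _) _.
by rewrite cardsT !card_prod !card_mx.
Qed.

Lemma galg_le : galg_mul (X mu n) (X nu n) g <= #|Sset|%:R.
Proof.
rewrite ffunE -sum1_card natr_sum.
rewrite [X in _ <= X]big_mkcond; apply: ler_sum => a _.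
case: (boolP `[< has_type a mu >]) => hta; last first.
  rewrite big1; first by case: (a \in Sset).
  by move=> b _; rewrite ffunE (negbTE hta) mul0r.
have hU : a \in unitmx by apply: unitary_unit; case: (asboolP _ hta).
rewrite (bigD1 (invmx a *m g)) /=; last by rewrite mulKVmx.
rewrite big1 ?addr0; last first.
  move=> b /andP [/eqP hab hne]; exfalso; move/eqP: hne; apply.
  by rewrite -hab mulKmx.
rewrite !ffunE hta mul1r.
case: (boolP `[< has_type (invmx a *m g) nu >]) => htb; last by case: (a \in Sset).
suff -> : a \in Sset by [].
rewrite inE hta /=; apply/existsP; exists (invmx a *m g).
by rewrite mulKVmx // eqxx htb.
Qed.
End Count.

Lemma rank_prod n (a b g : 'M[F]_n) : a *m b = g ->
  (\rank (g - 1%:M)%R <= \rank (a - 1%:M)%R + \rank (b - 1%:M)%R)%N.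
Proof.
move=> hab.
have -> : g - 1%:M = (a - 1%:M) *m b + (b - 1%:M).
  by rewrite mulmxBl mul1mx -hab addrA subrK.
apply: leq_trans (mxrank_add _ _) _.
by rewrite leq_add2r mxrankM_maxl.
Qed.

Lemma galg_ge0 (mu nu : utype F q) n (g : 'M[F]_n) : 0 <= galg_mul (X mu n) (X nu n) g.
Proof.
rewrite ffunE; apply: sumr_ge0 => a _; apply: sumr_ge0 => b _.
by rewrite !ffunE; apply: mulr_ge0; case: (`[< _ >]).
Qed.

Lemma main_lemma (mu nu lam : utype F q) (r : {poly rat}) :
  is_struct_const mu nu lam r -> r != 0 ->
  ((size r).-1%:Z <= 2 * ((usize mu)%:Z + (usize nu)%:Z - (usize lam)%:Z))%R.
Proof.
move=> hs hr.
set k := usize mu; set l := usize nu; set m := usize lam.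
set n0 := ut_n lam.
have hq := q_gt1 hF.
have hval : forall n, (n0 <= n)%N ->
    [/\ r.[qint q n] = galg_mul (X mu n) (X nu n) (embed n (ut_g lam)),
        \rank (embed n (ut_g lam) - 1%:M)^T = m &
        r.[qint q n] <= #|Sset mu nu (embed n (ut_g lam))|%:R].
  move=> n hn; have ht := has_type_embed hn.
  have e1 := hs n _ ht.
  have e2 : \rank (embed n (ut_g lam) - 1%:M)^T = m by rewrite mxrank_tr rank_embed.
  by split => //; rewrite -e1 galg_le.
case: (leqP m (k + l)) => hm.
  set rr := (k + l - m)%N.
  pose C : rat := (#|F| ^ (k * (m + rr)) * #|F| ^ (k * k))%:R.
  have hdeg : ((size r).-1 <= 2 * rr)%N.
    apply: (deg_bound (C := C) (d := rr) (n0 := n0) hq) => // n hn.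
    have [e1 e2 e3] := hval n hn.
    rewrite ger0_norm; last by rewrite e1 galg_ge0.
    apply: le_trans e3 _.
    have := card_Sset mu nu (embed n (ut_g lam)).
    rewrite e2 -/k -/l -/rr hF => hc.
    rewrite /C -natrM ler_nat -hF; apply: leq_trans hc _.
    by rewrite hF mulnAC.
  rewrite /rr in hdeg; lia.
exfalso; move/negP: (hr); apply.
have hz : forall n, (n0 <= n)%N -> r.[qint q n] = 0.
  move=> n hn; have [e1 e2 e3] := hval n hn.
  apply/eqP; rewrite eq_le e1 galg_ge0 andbT -e1.
  apply: le_trans e3 _.
  suff -> : #|Sset mu nu (embed n (ut_g lam))| = 0%N by [].
  apply/eqP; rewrite cards_eq0; apply/eqP/setP => a; rewrite !inE.
  apply/negP => /andP [/asboolP hta /existsP [b /andP [/eqP hab /asboolP htb]]].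
  have := rank_prod hab.
  have e2' : \rank (embed n (ut_g lam) - 1%:M) = m by rewrite -mxrank_tr.
  rewrite (has_type_rank hta) (has_type_rank htb) e2' -/k -/l.
  by rewrite leqNgt hm.
have hdeg : ((size r).-1 <= 2 * 0)%N.
  apply: (deg_bound (C := 0) (d := 0) (n0 := n0) hq) => // n hn.
  by rewrite hz // normr0 mul0r.
have /size1_polyC hc : (size r <= 1)%N by move: hdeg; case: (size r) => [|[|]].
rewrite hc in hz *; apply/eqP; congr (_%:P).
by have := hz n0 (leqnn _); rewrite hornerC.
Qed.
End Main.

Theorem lemma8p6 (F : finFieldType) (q : nat) (hF : #|F| = (q ^ 2)%N)
    (mu nu lam : utype F q) (r : {poly rat}) :
  is_struct_const mu nu lam r ->
  r != 0 ->
  ((size r).-1%:Z <= 2 * ((usize mu)%:Z + (usize nu)%:Z - (usize lam)%:Z))%R.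
Proof. exact: main_lemma. Qed.
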